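(* Consider the following sequence of multiple testing problems indexed by the dimension $n$. Let $f(\cdot\mid\theta)$, $\theta\in\mathbb{R}$, be a parametric family of densities, let $\theta_0\neq\theta_1$, and let $m\ge1$ be an integer. There is an unknown support set $\mathcal{S}=\mathcal{S}(n)\subseteq\{1,\dots,n\}$ with $s=|\mathcal{S}|$. Run the following sequential thresholding procedure with $K$ passes. Set $\mathcal{S}_0=\{1,\dots,n\}$ and $\gamma_0=\mathrm{median}(T_{i,m}\mid\theta_0)$, the median of the distribution of $T_{i,m}=\sum_{j=1}^m\log\frac{f(y_{i,j}\mid\theta_1)}{f(y_{i,j}\mid\theta_0)}$ when the $y_{i,j}$ are i.i.d. $f(\cdot\mid\theta_0)$. For $k=1,\dots,K$: for each $i\in\mathcal{S}_{k-1}$ draw fresh observations $y^{(k)}_{i,1},\dots,y^{(k)}_{i,m}$, independent of everything else, i.i.d. $f(\cdot\mid\theta_0)$ if $i\notin\mathcal{S}$ and i.i.d. $f(\cdot\mid\theta_1)$ if $i\in\mathcal{S}$, compute $T^{(k)}_{i,m}=\sum_{j=1}^m\log\frac{f(y^{(k)}_{i,j}\mid\theta_1)}{f(y^{(k)}_{i,j}\mid\theta_0)}$, and set $\mathcal{S}_k=\{i\in\mathcal{S}_{k-1}: T^{(k)}_{i,m}>\gamma_0\}$. The output is $\mathcal{S}_K$. (For the purpose of the condition below, $T^{(k)}_{i,m}$ is regarded as defined for all $i\in\mathcal{S}$ and all $k\le K$.) Suppose that $$\lim_{n\to\infty}\mathbb{P}\Big(\min_{1\le k\le K}\ \min_{i\in\mathcal{S}}T^{(k)}_{i,m}\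 \le\ \mathrm{median}(T_{i,m}\mid\theta_0)\Big)=0$$ and $K=(1+\epsilon)\log_2 n$ for some $\epsilon>0$. Then sequential thresholding is reliable: with $\mathcal{E}_\epsilon=\{\mathcal{S}_K\neq\mathcal{S}\}$, $\lim_{n\to\infty}\mathbb{P}(\mathcal{E}_\epsilon)=0$.
   Context: A support estimator $\widehat{\mathcal{S}}(n)$ is called reliable if $\lim_{n\to\infty}\mathbb{P}(\widehat{\mathcal{S}}(n)\neq\mathcal{S}(n))=0$. The quantities $s$, $\theta_0,\theta_1$ may depend on $n$. *)

(* Defs.v *)
From HB Require Import structures.
From mathcomp Require Import all_boot all_order all_algebra.
From mathcomp Require Import all_classical all_reals all_analysis.
Set Implicit Arguments. Unset Strict Implicit. Unset Printing Implicit Defensive.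
Import Order.TTheory GRing.Theory Num.Theory.
Import numFieldNormedType.Exports.
Local Open Scope classical_set_scope.
Local Open Scope ring_scope.

Definition mutually_independent (R : realType) (d : measure_display)
  (Omega : measurableType d) (P : probability Omega R) (I : eqType)
  (D : set I) (X : I -> Omega -> R) : Prop :=
  forall (J : seq I), uniq J -> (forall i, i \in J -> D i) ->
  forall B : I -> set R, (forall i, measurable (B i)) ->
  P (\bigcap_(i in [set i | i \in J]) (X i @^-1` B i)) =
  \big[*%E/1%E]_(i <- J) P (X i @^-1` B i).

Definition has_density (R : realType) (d : measure_display)
  (Omega : measurableType d) (P : probability Omega R)
  (Y : Omega -> R) (g : R -> R) : Prop :=
  forall A : set R, measurable A ->
    P (Y @^-1` A) = (\int[lebesgue_measure]_(x in A) (g x)%:E)%E.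

Definition density_family (R : realType) (f : R -> R -> R) : Prop :=
  forall theta : R, (forall x, 0 <= f theta x) /\
    measurable_fun setT (f theta) /\
    (\int[lebesgue_measure]_(x in setT) (f theta x)%:E = 1)%E.

Definition llr (R : realType) (f : R -> R -> R) (theta0 theta1 y : R) : R :=
  ln (f theta1 y / f theta0 y).

(* gamma is a median of the law of T_m = sum_{j<m} llr(Y_j) when
   Y_1..Y_m are i.i.d. with density f(.|θ0).  Since this law depends only on
   (f, θ0, θ1, m), it is expressed by quantifying over every probability space
   carrying such an i.i.d. sample. *)
Definition is_median_llr (R : realType) (f : R -> R -> R)
  (theta0 theta1 : R) (m : nat) (gamma : R) : Prop :=
  forall (d : measure_display) (Omega : measurableType d)
    (Q : probability Omega R) (Y : 'I_m -> Omega -> R),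
    (forall j, measurable_fun setT (Y j)) ->
    mutually_independent Q setT Y ->
    (forall j, has_density Q (Y j) (f theta0)) ->
    ((2^-1)%:E <= Q [set w | (\sum_(j < m) llr f theta0 theta1 (Y j w) <= gamma)%R])%E /\
    ((2^-1)%:E <= Q [set w | (gamma <= \sum_(j < m) llr f theta0 theta1 (Y j w))%R])%E.

(* Sequential thresholding: S_0 = {1..n},
   S_{k+1} = {i in S_k | T^{(k+1)}_i > gamma}, where T k i is the statistic
   of pass k+1 (passes indexed from 0). *)
Fixpoint seq_thresh (n : nat) (R : realType) (T : nat -> 'I_n -> R)
  (gamma : R) (k : nat) : {set 'I_n} :=
  match k with
  | 0 => [set: 'I_n]%SET
  | k'.+1 => [set i in seq_thresh T gamma k' | gamma < T k' i]%SET
  end.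

(* Main.v *)
Require Import Defs.
From HB Require Import structures.
From mathcomp Require Import all_boot all_order all_algebra.
From mathcomp Require Import all_classical all_reals all_analysis.
Import Order.TTheory GRing.Theory Num.Theory.
Import numFieldNormedType.Exports.
Local Open Scope classical_set_scope.
Local Open Scope ring_scope.
From mathcomp Require Import lra.
Section indep.
Context (R : realType) (d : measure_display) (Omega : measurableType d)
  (P : probability Omega R) (I : eqType) (D : set I) (X : I -> Omega -> R).
Hypothesis mX : forall i, measurable_fun setT (X i).
Hypothesis indX : mutually_independent P D X.

Definition rect (J : seq I) (B : I -> set R) : set Omega :=
  \bigcap_(i in [set i | i \in J]) (X i @^-1` B i).

Lemma rect_nil B : rect [::] B = setT.
Proof. by apply/seteqP; split => w // _ i. Qed.

Lemma rect_cons a J B : rect (a :: J) B = X a @^-1` B a `&` rect J B.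
Proof.
apply/seteqP; split => w /=.
- move=> H; split; first by apply: H; rewrite /= inE eqxx.
  by move=> i iJ; apply: H; rewrite /= inE iJ orbT.
- move=> [Ha HJ] i; rewrite /= inE => /orP[/eqP->|]//; exact: HJ.
Qed.

Lemma rect_cat J1 J2 B : rect (J1 ++ J2) B = rect J1 B `&` rect J2 B.
Proof.
elim: J1 => [|a J1 IH] /=; first by rewrite rect_nil setTI.
by rewrite !rect_cons IH setIA.
Qed.

Lemma rect_meas J B : (forall i, measurable (B i)) -> measurable (rect J B).
Proof.
move=> mB; elim: J => [|a J IH]; first by rewrite rect_nil.
rewrite rect_cons; apply: measurableI => //.
by have := mX a measurableT _ (mB a); rewrite setTI.
Qed.

Lemma rect_ext J B1 B2 : (forall i, i \in J -> B1 i = B2 i) -> rect J B1 = rect J B2.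
Proof.
elim: J => [|a J IH] H; first by rewrite !rect_nil.
rewrite !rect_cons H ?inE ?eqxx // IH // => i iJ; apply: H; by rewrite inE iJ orbT.
Qed.

Lemma P_rect J B : uniq J -> (forall i, i \in J -> D i) ->
  (forall i, measurable (B i)) ->
  P (rect J B) = \big[*%E/1%E]_(i <- J) P (X i @^-1` B i).
Proof. move=> uJ JD mB; exact: indX. Qed.

Definition Gsys J := [set C | exists2 B : I -> set R,
  (forall i, measurable (B i)) & C = rect J B].

Lemma Gsys_setT J : Gsys J setT.
Proof.
exists (fun=> setT) => //; apply/seteqP; split => // w _ i _; done.
Qed.

Lemma Gsys_setI J : setI_closed (Gsys J).
Proof.
move=> C1 C2 [B1 mB1 ->] [B2 mB2 ->].
exists (fun i => B1 i `&` B2 i); first by move=> i; apply: measurableI.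
apply/seteqP; split => w /=.
- by move=> [H1 H2] i iJ; split; [exact: H1|exact: H2].
- by move=> H; split => i iJ; have [] := H i iJ.
Qed.

Lemma Gsys_meas J : Gsys J `<=` measurable.
Proof. by move=> C [B mB ->]; exact: rect_meas. Qed.

Lemma sGsys_meas J : <<s Gsys J >> `<=` measurable.
Proof. exact: (smallest_sub (@sigma_algebra_measurable _ Omega) (@Gsys_meas J)). Qed.


Variable J : nat -> seq I.
Hypothesis Juniq : forall k, uniq (J k).
Hypothesis JD : forall k i, i \in J k -> D i.
Hypothesis Jdisj : forall k k' i, k != k' -> i \in J k -> i \notin J k'.

Lemma bigI_meas (ks : seq nat) (A : nat -> set Omega) :
  (forall k, k \in ks -> measurable (A k)) ->
  measurable (\big[setI/setT]_(k <- ks) A k).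
Proof.
move=> mA; rewrite big_seq; apply: big_ind => //; first exact: measurableI.
Qed.

Lemma block_indep (ks : seq nat) : uniq ks ->
  forall (A : nat -> set Omega), (forall k, k \in ks -> <<s Gsys (J k) >> (A k)) ->
  forall (L : seq I) (B : I -> set R), uniq L -> (forall i, i \in L -> D i) ->
  (forall k i, k \in ks -> i \in L -> i \notin J k) -> (forall i, measurable (B i)) ->
  P (\big[setI/setT]_(k <- ks) A k `&` rect L B) =
  (\big[*%E/1%E]_(k <- ks) P (A k) * P (rect L B))%E.
Proof.
elim: ks => [|k0 ks IH] /= uks A hA L B uL LD Ldisj mB.
  by rewrite !big_nil setTI mul1e.
move: uks => /andP[k0ks uks].
have mA k : k \in k0 :: ks -> measurable (A k).
  by move=> kin; apply: sGsys_meas; exact: hA.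
rewrite !big_cons -setIA.
set E := \big[setI/setT]_(k <- ks) A k `&` rect L B.
have mE : measurable E.
  apply: measurableI; last exact: rect_meas.
  by apply: bigI_meas => k kin; apply: mA; rewrite inE kin orbT.
have hA' : forall k, k \in ks -> <<s Gsys (J k) >> (A k).
  by move=> k kin; apply: hA; rewrite inE kin orbT.
have Ldisj' : forall k i, k \in ks -> i \in L -> i \notin J k.
  by move=> k i kin iL; apply: Ldisj => //; rewrite inE kin orbT.
have PE : P E = (\big[*%E/1%E]_(k <- ks) P (A k) * P (rect L B))%E.
  exact: IH.
have key : forall C, <<s Gsys (J k0) >> C -> P (C `&` E) = (P C * P E)%E.
  move=> C hC.
  have PE0 : (0 <= fine (P E))%R by apply: fine_ge0; exact: measure_ge0.
  pose m1 := mrestr P mE.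
  pose m2 := mscale (NngNum PE0) P.
  have fE := fin_num_measure P E mE.
  have H1 : forall Z, m1 Z = P (Z `&` E) by [].
  have H2 : forall Z, m2 Z = ((fine (P E))%:E * P Z)%E by [].
  have HC : m1 C = m2 C; last first.
    by rewrite H1 H2 (fineK fE) in HC; rewrite HC muleC.
  apply: (@g_sigma_algebra_measure_unique _ _ _ (Gsys (J k0)) (@Gsys_meas _)
    (fun=> setT) (fun=> Gsys_setT _) (bigcup_const _ _) m1 m2) => //.
  - exact: Gsys_setI.
  - move=> C' [B' mB' ->].
    apply: (@etrans _ _ (P (rect (J k0) B' `&` E))); first by [].
    apply: (@etrans _ _ ((fine (P E))%:E * P (rect (J k0) B'))%E); last by [].
    have -> : (fine (P E))%:E = (\big[*%E/1%E]_(k <- ks) P (A k) * P (rect L B))%E.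
      by rewrite fineK; [exact: PE|exact: fE].
    pose B'' := fun i => if i \in J k0 then B' i else B i.
    have e1 : rect (J k0) B' = rect (J k0) B''.
      by apply: rect_ext => i iJ; rewrite /B'' iJ.
    have dL : forall i, i \in L -> i \notin J k0.
      by move=> i iL; apply: Ldisj iL; rewrite mem_head.
    have e2 : rect L B = rect L B''.
      by apply: rect_ext => i iL; rewrite /B'' (negbTE (dL _ iL)).
    have mB'' : forall i, measurable (B'' i).
      by move=> i; rewrite /B''; case: ifP.
    have uJL : uniq (J k0 ++ L).
      by rewrite cat_uniq Juniq uL andbT; apply/hasPn => i iL; exact: dL.
    have JLD : forall i, i \in J k0 ++ L -> D i.
      by move=> i; rewrite mem_cat => /orP[/JD|/LD].
    have JLdisj : forall k i, k \in ks -> i \in J k0 ++ L -> i \notin J k.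
      move=> k i kin; rewrite mem_cat => /orP[iJ|iL]; last exact: Ldisj'.
      apply: (Jdisj k0 k i) iJ; apply/eqP => ek; move: k0ks; by rewrite ek kin.
    have Pcat : P (rect (J k0 ++ L) B'') = (P (rect (J k0) B'') * P (rect L B''))%E.
      rewrite !P_rect //; first by rewrite big_cat.
      by move=> i iJ; apply: JD iJ.
    have -> : rect (J k0) B' `&` E = \big[setI/setT]_(k <- ks) A k `&` rect (J k0 ++ L) B''.
      by rewrite /E e2 e1 rect_cat setICA.
    rewrite (IH uks A hA' _ _ uJL JLD JLdisj mB'') Pcat -e1 -e2.
    by rewrite muleA muleAC.
  - move=> _; apply: (le_lt_trans (probability_le1 _ _)) => //.
    exact: measurableI.
    exact: ltry.
rewrite key; last by apply: hA; rewrite mem_head.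
by rewrite PE muleA.
Qed.
End indep.
Lemma llr_meas (R : realType) (f : R -> R -> R) a b :
  density_family f -> measurable_fun setT (llr f a b).
Proof.
move=> hf.
have -> : llr f a b = (fun y => ln (f b y * (f a y) `^ (-1))).
  by apply/funext => y; rewrite /llr powR_inv1 //; have [] := hf a.
apply: measurableT_comp; first exact: measurable_realfun.measurable_ln.
have hb : measurable_fun setT (f b) by have [_ []] := hf b.
have ha : measurable_fun setT (fun y => (f a y) `^ (-1)).
  have h0 : measurable_fun setT (f a) by have [_ []] := hf a.
  exact: (measurableT_comp (measurable_realfun.measurable_powR (-1)) h0).
exact: (measurable_realfun.measurable_funM hb ha).
Qed.

Lemma T_meas (R : realType) (f : R -> R -> R) a b m d' (Om : measurableType d')
  (Y : 'I_m -> Om -> R) : density_family f ->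
  (forall j, measurable_fun setT (Y j)) ->
  measurable_fun setT (fun w => \sum_(j < m) llr f a b (Y j w)).
Proof.
move=> hf hY; apply: measurable_sum => j.
exact: measurableT_comp (llr_meas _ _ a b hf) (hY j).
Qed.

Lemma seq_thresh_mem n (R : realType) (T : nat -> 'I_n -> R) g k i :
  (i \in seq_thresh T g k) = [forall k' : 'I_k, g < T k' i].
Proof.
elim: k => [|k IH] /=; first by rewrite inE; apply/esym/forallP => -[].
rewrite inE IH; apply/andP/forallP.
- move=> [/forallP H Hk] k'; have [lt|ge] := ltnP k' k.
  + exact: (H (Ordinal lt)).
  + have e : nat_of_ord k' = k by apply/eqP; rewrite eqn_leq ge -ltnS ltn_ord.
    by rewrite e.
- move=> H; split; last exact: (H ord_max).
  by apply/forallP => k'; apply: (H (widen_ord (leqnSn _) k')).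
Qed.
Lemma prod_le (R : realType) (a : nat -> \bar R) (c : R) (s : seq nat) :
  0 <= c -> (forall k, k \in s -> (0 <= a k)%E /\ (a k <= c%:E)%E) ->
  (\big[*%E/1%E]_(k <- s) a k <= (c ^+ size s)%:E)%E.
Proof.
move=> c0; elim: s => [|k s IH] H; first by rewrite big_nil expr0.
rewrite big_cons /= exprS EFinM.
have [h0 h1] := H k (mem_head _ _).
apply: lee_pmul => //.
  by rewrite big_seq; apply: prode_ge0 => i iS; have [] := H i; rewrite // inE iS orbT.
by apply: IH => k' k's; apply: H; rewrite inE k's orbT.
Qed.
Lemma half_bound (R : realType) (x : \bar R) : x \is a fin_num ->
  ((2^-1)%:E <= x)%E -> ((1 - x) <= (2^-1)%:E)%E.
Proof.
move=> fx; rewrite -(fineK fx) -EFinB !lee_fin; lra.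
Qed.

Lemma survive_bound (R : realType) (f : R -> R -> R) (m : nat) (th0 th1 : R)
  (n : nat) (S : {set 'I_n}) (K : nat) (g : R) (d : measure_display)
  (Om : measurableType d) (P : probability Om R)
  (y : nat -> 'I_n -> 'I_m -> Om -> R) :
  density_family f -> is_median_llr f th0 th1 m g ->
  (forall k i j, measurable_fun setT (y k i j)) ->
  mutually_independent P [set kij : nat * 'I_n * 'I_m | (kij.1.1 < K)%N]
     (fun kij => y kij.1.1 kij.1.2 kij.2) ->
  (forall k i j, (k < K)%N ->
     has_density P (y k i j) (f (if i \in S then th1 else th0))) ->
  forall i, i \notin S ->
  (P (\big[setI/setT]_(k <- iota 0 K)
        [set w | (g < \sum_(j < m) llr f th0 th1 (y k i j w))%R])
    <= ((2^-1) ^+ K)%:E)%E.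
Proof.
move=> hf hmed hy hind hdens i hi.
set A := fun k => [set w | (g < \sum_(j < m) llr f th0 th1 (y k i j w))%R].
have hA : forall k, (k < K)%N -> (P (A k) <= (2^-1)%:E)%E.
  move=> k kK.
  have indj : mutually_independent P setT (fun j => y k i j).
    move=> J uJ _ B mB.
    have := hind [seq (k, i, j) | j <- J] _ _ (fun kij => B kij.2) _.
    rewrite big_map => <- //.
    - congr (P _); apply/seteqP; split => w /= H.
      + by move=> kij /mapP[j jJ ->]; exact: H.
      + by move=> j jJ; apply: (H (k, i, j)); exact: map_f.
    - by rewrite map_inj_uniq // => j1 j2 [].
    - by move=> kij /mapP[j _ ->].
  have densj : forall j, has_density P (y k i j) (f th0).
    by move=> j; have := hdens k i j kK; rewrite (negbTE hi).
  have [h1 _] := hmed d Om P (fun j => y k i j) (fun j => hy k i j) indj densj.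
  set X := [set w | (\sum_(j < m) llr f th0 th1 (y k i j w) <= g)%R] in h1.
  have mX : measurable X.
    have := T_meas R f th0 th1 m d Om (fun j => y k i j) hf (fun j => hy k i j)
      measurableT _ (measurable_itv `]-oo, g]).
    rewrite setTI; congr measurable; apply/seteqP; split => w;
      by rewrite /X /= in_itv /=.
  have -> : A k = ~` X.
    apply/seteqP; split => w; rewrite /A /X /=.
    - by rewrite ltNge => /negP.
    - by move=> /negP; rewrite -ltNge.
  rewrite probability_setC //; apply: half_bound => //.
  exact: fin_num_measure.
pose X := fun kij : nat * 'I_n * 'I_m => y kij.1.1 kij.1.2 kij.2.
have mX : forall x, measurable_fun setT (X x) by move=> x; exact: hy.
pose J := fun k => if (k < K)%N then [seq (k, i, j) | j <- enum 'I_m] else [::].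
have Jmem : forall k x, x \in J k -> [/\ x.1.1 = k, (k < K)%N & x.1.2 = i].
  by move=> k x; rewrite /J; case: ifP => // kK /mapP[j _ ->].
have Juniq : forall k, uniq (J k).
  move=> k; rewrite /J; case: ifP => // _.
  by rewrite map_inj_uniq ?enum_uniq // => j1 j2 [].
have JD : forall k x, x \in J k -> [set kij : nat * 'I_n * 'I_m | (kij.1.1 < K)%N] x.
  by move=> k x /Jmem[e kK _]; rewrite /= e.
have Jdisj : forall k k' x, k != k' -> x \in J k -> x \notin J k'.
  move=> k k' x kk' /Jmem[e1 _ _]; apply/negP => /Jmem[e2 _ _].
  by move: kk'; rewrite -e1 -e2 eqxx.
have hAs : forall k, k \in iota 0 K -> <<s Gsys R d Om _ X (J k) >> (A k).
  move=> k; rewrite mem_iota add0n => /andP[_ kK].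
  set G := Gsys R d Om _ X (J k).
  have hyj : forall j, measurable_fun (T := g_sigma_algebraType G) setT
      (fun w => y k i j w).
    move=> j _ Y mY; rewrite setTI; apply: sub_sigma_algebra.
    exists (fun x => if x == (k, i, j) then Y else setT).
    - by move=> x; case: ifP.
    - apply/seteqP; split => w /=.
      + by move=> Hw x xJ; case: eqP => [->|_].
      + move=> H; have := H (k, i, j); rewrite eqxx; apply.
        by rewrite /J kK; apply: map_f; rewrite mem_enum.
  have hT := T_meas R f th0 th1 m _ (g_sigma_algebraType G) (fun j w => y k i j w) hf hyj.
  have := hT measurableT _ (measurable_itv `]g, +oo[); rewrite setTI.
  suff -> : A k = (fun w => \sum_(j < m) llr f th0 th1 (y k i j w)) @^-1` `]g, +oo[ by [].
  by apply/seteqP; split => w; rewrite /A /= in_itv /= andbT.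
have := @block_indep R d Om P _ _ X mX hind J Juniq JD Jdisj (iota 0 K)
  (iota_uniq _ _) A hAs [::] (fun=> setT) erefl.
move=> /(_ _ _ (fun=> measurableT)).
rewrite rect_nil setIT probability_setT mule1 => ->.
rewrite -[X in ((_ ^+ X)%:E)](size_iota 0 K); apply: prod_le => // k.
rewrite mem_iota add0n => /andP[_ kK]; split; [exact: measure_ge0|exact: hA].
by [].
by [].
Qed.

Lemma in_bigsetU (T : Type) (I : eqType) (s : seq I) (Pr : pred I) (F : I -> set T) w :
  (\big[setU/set0]_(i <- s | Pr i) F i) w <-> exists2 i, (i \in s) && Pr i & F i w.
Proof.
elim: s => [|a s IH]; first by rewrite big_nil; split => // -[].
rewrite big_cons; split.
- case: ifP => Pa.
  + move=> [Fa|/IH[i /andP[iS Pi] Fi]]; first by exists a; rewrite ?mem_head.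
    by exists i => //; rewrite inE iS orbT.
  + move=> /IH[i /andP[iS Pi] Fi]; by exists i => //; rewrite inE iS orbT.
- move=> [i /andP[]]; rewrite inE => /orP[/eqP->|iS] Pi Fi.
  + by rewrite Pi; left.
  + have H : (\big[setU/set0]_(j <- s | Pr j) F j) w.
      by apply/IH; exists i => //; rewrite iS.
    by case: ifP => _ //; right.
Qed.

Lemma in_bigsetI (T : Type) (I : eqType) (s : seq I) (F : I -> set T) w :
  (\big[setI/setT]_(i <- s) F i) w <-> forall i, i \in s -> F i w.
Proof.
elim: s => [|a s IH]; first by rewrite big_nil.
rewrite big_cons; split.
- move=> [Fa /IH H] i; rewrite inE => /orP[/eqP->|]//; exact: H.
- move=> H; split; first by apply: H; rewrite mem_head.
  by apply/IH => i iS; apply: H; rewrite inE iS orbT.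
Qed.

Lemma union_bound (R : realType) d (Om : measurableType d) (P : probability Om R)
  (I : Type) (s : seq I) (Pr : pred I) (F : I -> set Om) (c : R) :
  0 <= c -> (forall i, Pr i -> measurable (F i) /\ (P (F i) <= c%:E)%E) ->
  (P (\big[setU/set0]_(i <- s | Pr i) F i) <= ((size s)%:R * c)%:E)%E.
Proof.
move=> c0 H; elim: s => [|a s IH]; first by rewrite big_nil measure0 mul0r.
rewrite big_cons /=.
have mr : measurable (\big[setU/set0]_(j <- s | Pr j) F j).
  by apply: bigsetU_measurable => i /H[].
have le1 : ((size s)%:R * c <= (size s).+1%:R * c)%R.
  by rewrite ler_wpM2r // ler_nat.
case: ifP => Pa; last exact: le_trans IH _.
have [ma Pa'] := H a Pa.
apply: le_trans (measureU2 _ ma mr) _.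
rewrite -[(size s).+1]addn1 natrD mulrDl mul1r addrC EFinD.
exact: leeD.
Qed.

Lemma bad_bound (R : realType) (f : R -> R -> R) (m : nat) (th0 th1 : R)
  (n : nat) (S : {set 'I_n}) (K : nat) (g : R) (d : measure_display)
  (Om : measurableType d) (P : probability Om R)
  (y : nat -> 'I_n -> 'I_m -> Om -> R) :
  density_family f -> is_median_llr f th0 th1 m g ->
  (forall k i j, measurable_fun setT (y k i j)) ->
  mutually_independent P [set kij : nat * 'I_n * 'I_m | (kij.1.1 < K)%N]
     (fun kij => y kij.1.1 kij.1.2 kij.2) ->
  (forall k i j, (k < K)%N ->
     has_density P (y k i j) (f (if i \in S then th1 else th0))) ->
  let T k i w := \sum_(j < m) llr f th0 th1 (y k i j w) in
  is_true (P [set w | seq_thresh (fun k i => T k i w) g K != S] <=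
   P [set w | exists k, (k < K)%N /\ exists2 i, i \in S & (T k i w <= g)%R]
     + ((n%:R * (2^-1) ^+ K)%:E))%E.
Proof.
move=> hf hmed hy hind hdens T.
set E1 := [set w | exists k, _].
pose Surv i := \big[setI/setT]_(k <- iota 0 K) [set w | (g < T k i w)%R].
pose E2 := \big[setU/set0]_(i <- enum 'I_n | i \notin S) Surv i.
have hTm : forall k i, measurable_fun setT (T k i).
  by move=> k i; apply: T_meas => // j; exact: hy.
have mlt : forall k i, measurable [set w | (g < T k i w)%R].
  move=> k i; have := hTm k i measurableT _ (measurable_itv `]g, +oo[).
  by rewrite setTI; congr measurable; apply/seteqP; split => w; rewrite /= in_itv /= andbT.
have mle : forall k i, measurable [set w | (T k i w <= g)%R].
  move=> k i; have := hTm k i measurableT _ (measurable_itv `]-oo, g]).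
  by rewrite setTI; congr measurable; apply/seteqP; split => w; rewrite /= in_itv /=.
have mE1 : measurable E1.
  have -> : E1 = \big[setU/set0]_(k <- iota 0 K)
      \big[setU/set0]_(i <- enum 'I_n | i \in S) [set w | (T k i w <= g)%R].
    apply/seteqP; split => w.
    - move=> [k [kK [i iS Ti]]]; apply/in_bigsetU; exists k.
        by rewrite mem_iota add0n kK.
      by apply/in_bigsetU; exists i => //; rewrite mem_enum iS.
    - move=> /in_bigsetU[k /andP[]]; rewrite mem_iota add0n => /andP[_ kK] _.
      by move=> /in_bigsetU[i /andP[_ iS] Ti]; exists k; split => //; exists i.
  apply: bigsetU_measurable => k _; apply: bigsetU_measurable => i _; exact: mle.
have mE2 : measurable E2.
  by apply: bigsetU_measurable => i _; apply: bigsetI_measurable => k _; exact: mlt.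
have ebad : [set w | seq_thresh (fun k i => T k i w) g K != S] = E1 `|` E2.
  apply/seteqP; split => w /=.
  - move=> hne; case: (pselect (E1 w)) => [|n1]; [by left|right].
    case: (pselect (E2 w)) => [//|n2]; exfalso; move/eqP: hne; apply.
    apply/setP => i; rewrite seq_thresh_mem.
    case iS: (i \in S).
    + apply/forallP => k; rewrite ltNge; apply/negP => Tle; apply: n1.
      by exists k; split => //; exists i.
    + apply/negP => /forallP H; apply: n2; apply/in_bigsetU; exists i.
        by rewrite mem_enum iS.
      apply/in_bigsetI => k; rewrite mem_iota add0n => /andP[_ kK].
      exact: (H (Ordinal kK)).
  - move=> [[k [kK [i iS Ti]]]|/in_bigsetU[i /andP[_ niS] /in_bigsetI H]];
      apply/eqP => e.
    + have : i \in seq_thresh (fun k i => T k i w) g K by rewrite e.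
      by rewrite seq_thresh_mem => /forallP/(_ (Ordinal kK)) /=; rewrite ltNge Ti.
    + have : i \in seq_thresh (fun k i => T k i w) g K.
        rewrite seq_thresh_mem; apply/forallP => k; apply: H.
        by rewrite mem_iota add0n ltn_ord.
      by rewrite e (negbTE niS).
rewrite ebad; apply: le_trans (measureU2 _ mE1 mE2) _; apply: leeD => //.
rewrite /E2 -[X in (X%:R * _)%R](size_enum_ord n); apply: union_bound.
  by apply: exprn_ge0; rewrite invr_ge0.
move=> i niS; split.
  by apply: bigsetI_measurable => k _; exact: mlt.
exact: (survive_bound R f m th0 th1 n S K g d Om P y hf hmed hy hind hdens i niS).
Qed.

Lemma u_le (R : realType) (eps : R) (K : nat) (n : nat) : 0 < eps -> (1 <= n)%N ->
  K = `|Num.ceil ((1 + eps) * (ln n%:R / ln 2))|%N ->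
  n%:R * (2^-1) ^+ K <= expR (- (eps * ln (n%:R : R))).
Proof.
move=> e0 n1 hK.
have x0 : 0 <= ln (n%:R : R) by apply: ln_ge0; rewrite ler1n.
have l2 : 0 < ln (2 : R) by apply: ln_gt0; lra.
have hKr : (1 + eps) * ln (n%:R : R) <= K%:R * ln 2.
  set y := (1 + eps) * (ln (n%:R : R) / ln 2).
  have y0 : 0 <= y by rewrite /y mulr_ge0 ?divr_ge0 //; [lra|exact: ltW].
  have c0 : 0 <= Num.ceil y by rewrite ceil_ge0; lra.
  have : y <= K%:R by rewrite hK natr_absz ger0_norm // ceil_ge.
  move=> /(ler_wpM2r (ltW l2)).
  by rewrite /y -mulrA divfK //; apply: lt0r_neq0.
have e2 : (2^-1 : R) ^+ K = expR (- (K%:R * ln 2)).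
  rewrite exprVn expRN; congr (_^-1).
  by rewrite mulr_natl -lnXn // lnK // posrE exprn_gt0.
have n0 : (0 : R) < n%:R by rewrite ltr0n.
rewrite e2; apply: (@le_trans _ _ (n%:R * expR (- ((1 + eps) * ln (n%:R : R))))).
  by rewrite ler_wpM2l ?ler0n // ler_expR lerN2.
rewrite mulrDl mul1r opprD expRD mulrA (expRN (ln _)) lnK ?posrE // mulfV ?mul1r //.
exact: lt0r_neq0.
Qed.

Lemma u_cvg (R : realType) (eps : R) (K : nat -> nat) : 0 < eps ->
  (forall n, K n = `|Num.ceil ((1 + eps) * (ln n%:R / ln 2))|%N) ->
  (fun n => n%:R * (2^-1) ^+ (K n)) @ \oo --> (0 : R).
Proof.
move=> e0 hK; apply/cvgrPdist_lt => e el0.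
pose c := expR ((e * eps)^-1).
exists (Num.Def.archi_bound c).+1 => // n /= hn.
have n1 : (1 <= n)%N by apply: leq_trans hn.
have n0 : (0 : R) < n%:R by rewrite ltr0n.
have hc : c < n%:R.
  apply: (lt_le_trans (archi_boundP (expR_ge0 _))).
  by rewrite ler_nat; apply: ltnW.
have hl : (e * eps)^-1 < ln (n%:R : R).
  by rewrite -[X in X < _]expRK ltr_ln ?posrE ?expR_gt0.
have u0 : 0 <= n%:R * (2^-1 : R) ^+ K n by rewrite mulr_ge0 ?exprn_ge0 ?invr_ge0.
rewrite sub0r normrN ger0_norm //.
apply: le_lt_trans (u_le _ _ _ _ e0 n1 (hK n)) _.
set z := eps * ln (n%:R : R).
have zc : e^-1 < z.
  have -> : e^-1 = eps * (e * eps)^-1.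
    by rewrite invfM mulrCA mulfV ?mulr1 //; exact: lt0r_neq0.
  by rewrite /z ltr_pM2l.
have hz : 1 + z <= expR z := expR_ge1Dx z.
have ez : 0 < expR z := expR_gt0 z.
have ie : e^-1 < expR z.
  apply: (lt_le_trans zc); apply: le_trans hz; rewrite lerDr; exact: ler01.
rewrite expRN -[X in X < _]mul1r ltr_pdivrMr //.
by move: ie; rewrite -(ltr_pM2l el0) mulfV //; exact: lt0r_neq0.
Qed.

Theorem theorem2 (R : realType) (f : R -> R -> R) (m : nat)
  (theta0 theta1 : nat -> R) (S : forall n : nat, {set 'I_n})
  (K : nat -> nat) (eps : R) (gamma0 : nat -> R)
  (d : nat -> measure_display) (Omega : forall n, measurableType (d n))
  (P : forall n, probability (Omega n) R)
  (y : forall n, nat -> 'I_n -> 'I_m -> Omega n -> R) :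
  density_family f ->
  (1 <= m)%N ->
  (forall n, theta0 n != theta1 n) ->
  0 < eps ->
  (forall n, K n = `|Num.ceil ((1 + eps) * (ln n%:R / ln 2))|%N) ->
  (forall n, is_median_llr f (theta0 n) (theta1 n) m (gamma0 n)) ->
  (forall n k i j, measurable_fun setT (y n k i j)) ->
  (forall n, mutually_independent (P n)
     [set kij : nat * 'I_n * 'I_m | (kij.1.1 < K n)%N]
     (fun kij => y n kij.1.1 kij.1.2 kij.2)) ->
  (forall n k i j, (k < K n)%N ->
     has_density (P n) (y n k i j)
       (f (if i \in S n then theta1 n else theta0 n))) ->
  let T n k i w := \sum_(j < m) llr f (theta0 n) (theta1 n) (y n k i j w) in
  (fun n => P n [set w | exists k, (k < K n)%N /\
       exists2 i, i \in S n & T n k i w <= gamma0 n]) @ \oo --> 0%E ->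
  (fun n => P n [set w | seq_thresh (fun k i => T n k i w) (gamma0 n) (K n)
                          != S n]) @ \oo --> 0%E.
Proof.
move=> hf hm hth heps hK hmed hy hind hdens T hlim.
have hb : forall n, (P n [set w | seq_thresh (fun k i => T n k i w) (gamma0 n) (K n)
                          != S n] <= P n [set w | exists k, (k < K n)%N /\
       exists2 i, i \in S n & (T n k i w <= gamma0 n)%R]
       + ((n%:R * (2^-1) ^+ K n)%:E))%E.
  move=> n; exact: (bad_bound R f m (theta0 n) (theta1 n) n (S n) (K n) (gamma0 n)
    (d n) (Omega n) (P n) (y n) hf (hmed n) (hy n) (hind n) (hdens n)).
apply: (@squeeze_cvge _ _ _ R (fun=> 0%E) _ (fun n => P n [set w | exists k, (k < K n)%N /\
       exists2 i, i \in S n & (T n k i w <= gamma0 n)%R]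
       + ((n%:R * (2^-1) ^+ K n)%:E))%E).
- by apply: nearW => n; rewrite measure_ge0 hb.
- exact: cvg_cst.
- rewrite -[0%E]adde0; apply: cvgeD => //.
  apply/fine_cvgP; split; first exact: nearW.
  exact: (u_cvg R eps K heps hK).
Qed.
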